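(* Let $r>1$ be real and let $p_m,q$ be $r$-mighty primes with $p_m>q^2$. If $n\in\mathbb{N}$ satisfies $\sigma_{-r}(n)\in\left(\sigma_{-r}(q)u_m(r),\ \sigma_{-r}(qp_m)\right)$, then $q\mid n$.
   Context: $p_m$ denotes the $m$-th prime. For $n\in\mathbb{N}$, $\sigma_{-r}(n)=\sum_{d\mid n}d^{-r}$. Let $u_m(r)=\prod_{t=m+1}^\infty\frac1{1-p_t^{-r}}$. A prime $p_m$ is $r$-mighty if $1+p_m^{-r}>u_m(r)$. *)

(* Defs.v *)
From HB Require Import structures.
From mathcomp Require Import all_boot all_order all_algebra.
From mathcomp Require Import all_classical all_reals all_analysis.
Set Implicit Arguments. Unset Strict Implicit. Unset Printing Implicit Defensive.
Import Order.TTheory GRing.Theory Num.Theory.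
Import numFieldNormedType.Exports.
Local Open Scope ring_scope.

Lemma next_prime_ex (n : nat) : exists p, (n < p)%N && prime p.
Proof. by case: (prime_above n) => p H1 H2; exists p; rewrite H1 H2. Qed.

Definition next_prime (n : nat) : nat := ex_minn (next_prime_ex n).

(* nth_prime m = p_m, 1-indexed: p_1 = 2, p_2 = 3, ... (nth_prime 0 = 1 is junk) *)
Definition nth_prime (m : nat) : nat := iter m next_prime 1%N.

Definition sigma_neg (R : realType) (r : R) (n : nat) : R :=
  \sum_(d <- divisors n) (d%:R) `^ (- r).

Definition u_tail (R : realType) (r : R) (m : nat) : R :=
  limn (fun N : nat => \prod_(m.+1 <= t < N) (1 - (nth_prime t)%:R `^ (- r))^-1).

Definition mighty (R : realType) (r : R) (m : nat) : Prop :=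
  1 + (nth_prime m)%:R `^ (- r) > u_tail r m.

(* Main.v *)
Require Import Defs.
From HB Require Import structures.
From mathcomp Require Import all_boot all_order all_algebra.
From mathcomp Require Import all_classical all_reals all_analysis.
From mathcomp Require Import ring lra zify.
Import Order.TTheory GRing.Theory Num.Theory.
Import numFieldNormedType.Exports.
Local Open Scope ring_scope.

Lemma np_spec n : [/\ (n < next_prime n)%N, prime (next_prime n) &
  forall p, (n < p)%N -> prime p -> (next_prime n <= p)%N].
Proof.
rewrite /next_prime; case: ex_minnP => p /andP[h1 h2] h3; split => //.
by move=> q hq pq; apply: h3; rewrite hq pq.
Qed.

Lemma npS t : nth_prime t.+1 = next_prime (nth_prime t).
Proof. by []. Qed.

Lemma np_prime t : (0 < t)%N -> prime (nth_prime t).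
Proof. by case: t => // t _; rewrite npS; case: (np_spec (nth_prime t)). Qed.

Lemma np_lt t : (nth_prime t < nth_prime t.+1)%N.
Proof. by rewrite npS; case: (np_spec (nth_prime t)). Qed.

Lemma np_ge t : (t < nth_prime t)%N.
Proof. elim: t => // t IH; exact: leq_ltn_trans IH (np_lt t). Qed.

Lemma np_homo : {homo nth_prime : a b / (a < b)%N}.
Proof. by apply: homo_ltn; [exact: ltn_trans | exact: np_lt]. Qed.

Lemma np_mono a b : (nth_prime a < nth_prime b)%N = (a < b)%N.
Proof.
case: (ltnP a b) => h; first exact: np_homo.
by apply/negbTE; rewrite -leqNgt; apply: (ltnW_homo np_homo).
Qed.

Lemma np_surj p : prime p -> exists t, nth_prime t = p.
Proof.
move=> pp.
have key : forall d j, (p - nth_prime j = d)%N -> (nth_prime j < p)%N ->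
    exists t, nth_prime t = p.
  elim/ltn_ind => d IH j hd hj.
  case: (np_spec (nth_prime j)) => _ _ /(_ p hj pp); rewrite -npS => hle.
  case: (ltngtP (nth_prime j.+1) p) => h; last by exists j.+1.
  - apply: (IH (p - nth_prime j.+1)%N _ j.+1 erefl h).
    rewrite -hd; apply: ltn_sub2l => //; exact: np_lt.
  - by move: hle; rewrite leqNgt h.
apply: (key _ 0%N erefl); exact: prime_gt1.
Qed.

Lemma sum_sub (R : realType) (T : eqType) (s t : seq T) (F : T -> R) :
  uniq s -> {subset s <= t} -> uniq t -> (forall x, x \in t -> 0 <= F x) ->
  \sum_(x <- s) F x <= \sum_(x <- t) F x.
Proof.
move=> us st ut F0.
rewrite [X in _ <= X](bigID (fun x => x \in s)) /=.
have -> : \sum_(x <- t | x \in s) F x = \sum_(x <- s) F x.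
  rewrite -big_filter; apply: perm_big; apply: uniq_perm => //.
    exact: filter_uniq.
  by move=> x; rewrite mem_filter; case xs: (x \in s) => //=; rewrite st.
rewrite lerDl big_seq_cond; apply: sumr_ge0 => x /andP[]; auto.
Qed.

Lemma sig_ge2 (R : realType) (r : R) n d1 d2 : (0 < n)%N -> d1 != d2 ->
  (d1 %| n)%N -> (d2 %| n)%N ->
  (d1%:R) `^ (- r) + (d2%:R) `^ (- r) <= sigma_neg r n.
Proof.
move=> n0 d12 h1 h2.
have := @sum_sub R _ [:: d1; d2] (divisors n) (fun d => (d%:R : R) `^ (- r)).
rewrite !big_cons big_nil addr0; apply.
- by rewrite /= inE d12.
- by move=> x; rewrite !inE => /orP[] /eqP ->; rewrite -dvdn_divisors.
- exact: divisors_uniq.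
- by move=> *; exact: powR_ge0.
Qed.

Lemma sig_pow (R : realType) (r : R) p e : prime p ->
  sigma_neg r (p ^ e) <= \sum_(i < e.+1) ((p%:R : R) `^ (- r)) ^+ i.
Proof.
move=> pp.
have hd d : d \in divisors (p ^ e) -> d = (p ^ logn p d)%N /\ (logn p d <= e)%N.
  rewrite -dvdn_divisors ?expn_gt0 ?prime_gt0 //.
  by case/(dvdn_pfactor _ _ pp) => i ie ->; rewrite pfactorK.
rewrite /sigma_neg.
have -> : \sum_(d <- divisors (p ^ e)) (d%:R : R) `^ (- r) =
  \sum_(d <- divisors (p ^ e)) ((p%:R : R) `^ (- r)) ^+ (logn p d).
  rewrite big_seq [RHS]big_seq; apply: eq_bigr => d /hd [hd1 _]; rewrite {1}hd1.

  by rewrite natrX -powR_mulrn ?ler0n // powRAC powR_mulrn // powR_ge0.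
rewrite -(big_map (logn p) xpredT (fun i => ((p%:R : R) `^ (- r)) ^+ i)).
rewrite -(big_mkord xpredT (fun i => ((p%:R : R) `^ (- r)) ^+ i)).
apply: sum_sub.
- rewrite map_inj_in_uniq ?divisors_uniq //.
  by move=> x y /hd [hx _] /hd [hy _] ex; rewrite hx hy ex.
- by move=> i /mapP [d /hd [_ h] ->]; rewrite mem_index_iota.
- exact: iota_uniq.
- by move=> i _; rewrite exprn_ge0 // powR_ge0.
Qed.

Lemma geom_le (R : realType) (x : R) E : 0 <= x < 1 ->
  \sum_(i < E) x ^+ i <= (1 - x)^-1.
Proof.
case/andP=> x0 x1.
have h : (\sum_(i < E) x ^+ i) * (1 - x) = 1 - x ^+ E.
  elim: E => [|E IH]; first by rewrite big_ord0 expr0 mul0r subrr.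
  by rewrite big_ord_recr /= mulrDl IH exprS; ring.
have x1' : 0 < 1 - x by rewrite subr_gt0.
have -> : \sum_(i < E) x ^+ i = (1 - x ^+ E) / (1 - x).
  by rewrite -h mulfK // lt0r_neq0.
have : (1 - x ^+ E) * (1 - x)^-1 <= 1 * (1 - x)^-1.
  by apply: ler_wpM2r; [rewrite invr_ge0 ltW | rewrite gerBl exprn_ge0].
by rewrite mul1r.
Qed.

Lemma gcd_split d a b : coprime a b -> (d %| a * b)%N ->
  (gcdn d a * gcdn d b)%N = d.
Proof.
move=> cab dab; apply/eqP; rewrite eqn_dvd; apply/andP; split.
  rewrite Gauss_dvd ?dvdn_gcdl //.
  exact: (coprime_dvdl (dvdn_gcdr _ _) (coprime_dvdr (dvdn_gcdr _ _) cab)).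
rewrite muln_gcdl dvdn_gcd dvdn_mulr //= muln_gcdr dvdn_gcd dvdn_mull //.

Qed.

Lemma sig_mul (R : realType) (r : R) a b : coprime a b -> (0 < a)%N -> (0 < b)%N ->
  sigma_neg r (a * b) <= sigma_neg r a * sigma_neg r b.
Proof.
move=> cab a0 b0; rewrite /sigma_neg.
pose h d := (gcdn d a, gcdn d b).
pose G (z : nat * nat) := ((z.1 * z.2)%N%:R : R) `^ (- r).
have hd d : d \in divisors (a * b) -> (gcdn d a * gcdn d b)%N = d.
  by rewrite -dvdn_divisors ?muln_gt0 ?a0 //; exact: gcd_split.
have -> : \sum_(d <- divisors (a * b)) (d%:R : R) `^ (- r) =
    \sum_(d <- divisors (a * b)) G (h d).
  by rewrite big_seq [RHS]big_seq; apply: eq_bigr => d /hd; rewrite /G /= => ->.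
rewrite -(big_map h xpredT G).
have -> : (\sum_(i <- divisors a) (i%:R : R) `^ (- r)) *
          (\sum_(i <- divisors b) (i%:R : R) `^ (- r)) =
          \sum_(z <- [seq (x, y) | x <- divisors a, y <- divisors b]) G z.
  rewrite big_allpairs big_distrl /=; apply: eq_bigr => x _.
  rewrite big_distrr /=; apply: eq_bigr => y _.
  by rewrite /G /= natrM powRM.
apply: sum_sub.
- rewrite map_inj_in_uniq ?divisors_uniq //.
  by move=> x y /hd hx /hd hy [e1 e2]; rewrite -hx -hy e1 e2.
- move=> z /mapP [d hdv ->]; apply/allpairsP; exists (gcdn d a, gcdn d b) => /=.
  by rewrite -!dvdn_divisors ?dvdn_gcdr.
- by apply: allpairs_uniq; rewrite ?divisors_uniq // => -[? ?] [? ?] _ _ [-> ->].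
- by move=> z _; exact: powR_ge0.
Qed.


Section An.
Variables (R : realType) (r : R).
Hypothesis r1 : 1 < r.

Definition gf (t : nat) : R := (1 - (nth_prime t)%:R `^ (- r))^-1.
Definition Pp (a : nat) := fun N : nat => \prod_(a.+1 <= t < N) gf t.

Lemma u_tailE a : u_tail r a = limn (Pp a).
Proof. by []. Qed.

Lemma x_bounds t : (0 < t)%N ->
  0 < (nth_prime t)%:R `^ (- r) /\ (nth_prime t)%:R `^ (- r) <= 2^-1
  /\ (nth_prime t)%:R `^ (- r) <= (t.+1)%:R `^ (- r).
Proof.
move=> t0; have p2 : (2 <= nth_prime t)%N by apply: prime_gt1; exact: np_prime.
have pge : (t.+1 <= nth_prime t)%N := np_ge t.
have r1' := r1; have r0 : 0 <= r by lra.
have pr1 : 0 < (nth_prime t)%:R `^ r :> R by rewrite powR_gt0 // ltr0n; lia.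
rewrite !powRN; split; first by rewrite invr_gt0.
split.
  rewrite lef_pV2 ?posrE ?invr_gt0 //.
  have hp : (2 : R) <= (nth_prime t)%:R by rewrite (ler_nat R 2).
  apply: (le_trans hp); apply: le1r_powR; lra.
rewrite lef_pV2 ?posrE // ?powR_gt0 ?ltr0n //.
by rewrite ge0_ler_powR ?nnegrE ?ler0n // ler_nat.
Qed.

Lemma gf_ge1 t : (0 < t)%N -> 1 <= gf t.
Proof.
move=> /x_bounds [x0 [xh _]]; rewrite /gf invf_ge1; last by lra.
by lra.
Qed.

Lemma Pp_ge0 a N : 1 <= Pp a N.
Proof.
rewrite /Pp; elim: N => [|N IH]; first by rewrite big_geq.
case: (leqP a.+1 N) => h; last by rewrite big_geq.
rewrite big_nat_recr //=; apply: (le_trans IH); apply: ler_peMr; first lra.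
by apply: gf_ge1; lia.
Qed.

Lemma Pp_nd a : nondecreasing_seq (Pp a).
Proof.
apply/nondecreasing_seqP => N; rewrite /Pp.
case: (leqP a.+1 N) => h; last by rewrite big_geq ?(ltnW h) // big_geq.
rewrite big_nat_recr //=; apply: ler_peMr; first by have := Pp_ge0 a N; rewrite /Pp; lra.
by apply: gf_ge1; lia.
Qed.

Definition K : R := 2 / (r - 1).
Definition F (j : nat) : R := K * (j%:R `^ (1 - r)).

Lemma key_ineq (T : R) : 1 <= T ->
  2 * (T + 1) `^ (- r) <= K * (T `^ (1 - r) - (T + 1) `^ (1 - r)).
Proof.
move=> T1; have r1' := r1.
have T0 : 0 < T by lra.
have J0 : 0 < T + 1 by lra.
rewrite /powR !gt_eqF //.
set LT := ln T; set LJ := ln (T + 1).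
set E := expR ((1 - r) * LJ).
have E0 : 0 < E by exact: expR_gt0.
have hD : (T + 1)^-1 <= LJ - LT.
  have h1 := expR_ge1Dx (ln (T / (T + 1))).
  rewrite lnK ?posrE ?divr_gt0 // in h1.
  rewrite ln_div ?posrE // -/LT -/LJ in h1.
  have -> : (T + 1)^-1 = 1 - T / (T + 1).
    by field; lra.
  lra.
have hX : E * (1 + (r - 1) * (LJ - LT)) <= expR ((1 - r) * LT).
  have -> : (1 - r) * LT = (1 - r) * LJ + (r - 1) * (LJ - LT) by ring.
  rewrite expRD ler_wpM2l //; [exact: ltW | exact: expR_ge1Dx].
have hJ : expR (- r * LJ) = E * (T + 1)^-1.
  have eJ : T + 1 = expR LJ by rewrite /LJ lnK ?posrE.
  rewrite [in RHS]eJ -expRN /E -expRD; congr expR; ring.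
have hK : K * (r - 1) = 2 by rewrite /K; field; lra.
have K0 : 0 < K by rewrite /K divr_gt0 //; lra.
rewrite hJ.
set iJ := (T + 1)^-1 in hD hJ *.
set X := expR ((1 - r) * LT) in hX *.
set D := LJ - LT in hD hX *.
have s1 : E * ((r - 1) * D) <= X - E.
  by move: hX; rewrite mulrDr mulr1; lra.
have s2 := ler_wpM2l (ltW K0) s1.
have s3 : K * (E * ((r - 1) * D)) = 2 * (E * D) by rewrite -hK; ring.
have s4 : 2 * (E * iJ) <= 2 * (E * D).
  by apply: ler_wpM2l => //; apply: ler_wpM2l => //; exact: ltW.
lra.
Qed.

Lemma gf_le t : (0 < t)%N -> gf t <= expR (F t - F t.+1).
Proof.
move=> t0; have r1' := r1.
have [x0 [xh xt]] := x_bounds _ t0.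
rewrite /gf; set x := (nth_prime t)%:R `^ (- r) in x0 xh xt *.
apply: (@le_trans _ _ (1 + 2 * x)).
  have h2 : 0 <= 1 - 2 * x by lra.
  have h3 := mulr_ge0 (ltW x0) h2.
  rewrite -div1r ler_pdivrMr; [ | lra].
  have -> : (1 + 2 * x) * (1 - x) = 1 + x * (1 - 2 * x) by ring.
  lra.
apply: (le_trans (expR_ge1Dx _)); rewrite ler_expR.
have T1 : (1 : R) <= t%:R by rewrite ler1n.
have := key_ineq _ T1; rewrite natr1 /F -mulrBr => h.
apply: le_trans h; lra.
Qed.

Lemma F_ge0 j : 0 <= F j.
Proof.
have r1' := r1; rewrite /F mulr_ge0 ?powR_ge0 // /K divr_ge0 //; lra.
Qed.

Lemma Pp_bound a N : Pp a N <= expR (F a.+1).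
Proof.
have r1' := r1.
case: (leqP a.+1 N) => h; last first.
  rewrite /Pp big_geq ?(ltnW h) // -expR0 ler_expR; exact: F_ge0.
have : Pp a N <= expR (F a.+1 - F N).
  rewrite -(subnKC h); elim: (N - a.+1)%N => [|d IH].
    by rewrite addn0 /Pp big_geq // subrr expR0.
  rewrite /Pp addnS big_nat_recr /=; last by rewrite leq_addr.
  have -> : F a.+1 - F (a.+1 + d).+1 =
      (F a.+1 - F (a.+1 + d)) + (F (a.+1 + d) - F (a.+1 + d).+1) by ring.
  rewrite expRD; apply: ler_pM => //.
  - by have := Pp_ge0 a (a.+1 + d); rewrite /Pp; lra.
  - by have := @gf_ge1 (a.+1 + d) isT; lra.
  - exact: gf_le.
move=> h2; apply: (le_trans h2); rewrite ler_expR; have := F_ge0 N; lra.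
Qed.

Lemma Pp_cvg a : cvgn (Pp a).
Proof.
apply: nondecreasing_is_cvgn; first exact: Pp_nd.
by exists (expR (F a.+1)) => _ [N _ <-]; exact: Pp_bound.
Qed.

Lemma Pp_le_u a N : Pp a N <= u_tail r a.
Proof. by rewrite u_tailE; apply: nondecreasing_cvgn_le; [exact: Pp_nd | exact: Pp_cvg]. Qed.

Lemma u_ge1 a : 1 <= u_tail r a.
Proof. by apply: le_trans (Pp_le_u a 0); rewrite /Pp big_geq. Qed.

End An.

Set Implicit Arguments. Unset Strict Implicit.

Lemma sig_ge0 (R : realType) (r : R) n : 0 <= sigma_neg r n.
Proof. by rewrite /sigma_neg sumr_ge0 // => *; exact: powR_ge0. Qed.

Lemma sig_one (R : realType) (r : R) n : (0 < n)%N ->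
  (forall p, prime p -> ~~ (p %| n)%N) -> sigma_neg r n <= 1.
Proof.
move=> n0 hp.
have -> : n = 1%N.
  case: (ltngtP n 1) => // h; first lia.
  by move: (hp _ (pdiv_prime h)); rewrite pdiv_dvd.
have := @sig_pow R r 2 0 isT; rewrite expn0 big_ord1 expr0; exact.
Qed.

Lemma sig_le_Pp (R : realType) (r : R) : 1 < r -> forall k N n, (0 < n)%N ->
  (forall p, prime p -> (p %| n)%N -> (nth_prime k < p < nth_prime N)%N) ->
  sigma_neg r n <= Pp R r k N.
Proof.
move=> r1 k N; elim: N => [|N IH] n n0 hn.
  apply: (le_trans (sig_one r n0 _)); last exact: (@Pp_ge0 R r r1).
  by move=> p pp; apply/negP => /(hn _ pp); rewrite /nth_prime /=; lia.
case: (posnP N) => [N0|Npos].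
  apply: (le_trans (sig_one r n0 _)); last exact: (@Pp_ge0 R r r1).
  move=> p pp; apply/negP => /(hn _ pp); rewrite N0 /= => /andP[_].

  have := prime_gt1 pp; have -> : next_prime 1 = 2%N.
    rewrite /next_prime; case: ex_minnP => q /andP[h1 h2] h3.
    by apply/eqP; rewrite eqn_leq h1 andbT; apply: h3.
  lia.
set p := nth_prime N.
have pp : prime p := np_prime N Npos.
case: (pfactor_coprime pp n0) => n' cpn' en.
have n'0 : (0 < n')%N by move: n0; rewrite en muln_gt0 => /andP[].
have hn' : forall d, prime d -> (d %| n')%N -> (nth_prime k < d < nth_prime N)%N.
  move=> d dp dn'.
  have dn : (d %| n)%N by rewrite en dvdn_mulr.
  case/andP: (hn d dp dn) => h1 h2; rewrite h1 /=.
  have [t et] := np_surj _ dp.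
  move: h2; rewrite -et np_mono ltnS leq_eqVlt => /orP[/eqP tN|]; last by rewrite np_mono.
  by move: cpn'; rewrite prime_coprime // -/p /p -tN et dn'.
have IH' := IH n' n'0 hn'.
have hmul : sigma_neg r n <= sigma_neg r n' * sigma_neg r (p ^ logn p n).
  rewrite {1}en; apply: sig_mul => //.
  by apply: coprimeXr; rewrite coprime_sym.
case: (eqVneq (logn p n) 0%N) => [e0|epos].
  move: hmul; rewrite e0 expn0.
  have -> : n = n' by rewrite en e0 muln1.
  move=> _; apply: (le_trans IH'); apply: (@Pp_nd R r r1); exact: leqnSn.
have pn : (p %| n)%N by rewrite en dvdn_mull // dvdn_exp // lt0n.
have kN : (k < N)%N by move: (hn p pp pn) => /andP[]; rewrite np_mono.
apply: (le_trans hmul).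
rewrite /Pp big_nat_recr //= -/(Pp R r k N).
apply: ler_pM; [exact: sig_ge0 | exact: sig_ge0 | exact: IH' |].
apply: (le_trans (@sig_pow R r p _ pp)); apply: geom_le.
have [x0 [xh _]] := @x_bounds R r r1 N Npos.
rewrite ltW //=; lra.
Qed.

Lemma alg_ineq (R : realType) (y u v w : R) : 3 <= y -> 0 < u -> u * y <= 1 ->
  0 <= v -> v <= u * u -> u * y <= w * (y - 1) -> (1 + u) * (1 + v) <= 1 + w.
Proof.
move=> y3 u0 uy v0 vu wy.
have h1 : (1 + u) * (1 + v) <= (1 + u) * (1 + u * u).
  by apply: ler_wpM2l; lra.
have h2 : (u + u * u + u * u * u) * (y - 1) <= u * y.
  have e : u * y - (u + u * u + u * u * u) * (y - 1) =
           u * ((1 - u * y) * (1 + u) + u * u) by ring.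
  have : 0 <= u * ((1 - u * y) * (1 + u) + u * u).
    apply: mulr_ge0; first lra.
    apply: addr_ge0; apply: mulr_ge0; lra.
  lra.
have h3 : u + u * u + u * u * u <= w.
  rewrite -(@ler_pM2r _ (y - 1)); [lra | lra].
have e2 : (1 + u) * (1 + u * u) = 1 + (u + u * u + u * u * u) by ring.
lra.
Qed.

Lemma ineqA (R : realType) (r : R) q p P : 1 < r -> prime p -> (p < q)%N ->
  (q ^ 2 < P)%N ->
  (1 + q%:R `^ (- r)) * (1 + P%:R `^ (- r)) <= 1 + p%:R `^ (- r).
Proof.
move=> r1 pp pq qP.
have p2 := prime_gt1 pp.
set y : R := q%:R.
have y3 : 3 <= y by rewrite /y (ler_nat R 3); lia.
have r0 : 0 <= r by lra.
set X := y `^ r.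
have Xy : y <= X by apply: le1r_powR; lra.
have X0 : 0 < X by lra.
rewrite !powRN -/y -/X.
apply: (alg_ineq (y := y)) => //.
- by rewrite invr_gt0.
- by rewrite mulrC ler_pdivrMr // mul1r.
- have P0 : (0 < P)%N by lia.
  have q0 : (0 < q)%N by lia.
  rewrite -invfM lef_pV2 ?posrE ?mulr_gt0 ?powR_gt0 ?ltr0n //.
  rewrite -powRM ?ler0n // ge0_ler_powR ?nnegrE ?mulr_ge0 ?ler0n //.
  by rewrite /y -natrM ler_nat; lia.
- have pR : (p%:R : R) <= y - 1 by rewrite /y lerBrDr natr1 ler_nat.
  have Yle : p%:R `^ r <= (y - 1) / y * X.
    apply: (@le_trans _ _ ((y - 1) `^ r)).
      by rewrite ge0_ler_powR ?nnegrE ?ler0n //; lra.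
    have e : y - 1 = (y - 1) / y * y by rewrite divfK //; lra.
    rewrite {1}e powRM; last 2 first.
    + by apply: divr_ge0; lra.
    + lra.
    rewrite -/X; apply: ler_wpM2r; first lra.
    apply: ge1r_powR; last lra.
    rewrite divr_gt0 /=; last 2 first; [lra | lra |].
    rewrite ler_pdivrMr; lra.
  have Ypos : 0 < p%:R `^ r :> R by rewrite powR_gt0 // ltr0n; lia.
  have : ((y - 1) / y * X)^-1 <= (p%:R `^ r)^-1.
    by rewrite lef_pV2 // posrE mulr_gt0 // divr_gt0; lra.
  move=> h.
  have z0 : 0 <= y - 1 by lra.
  apply: (le_trans _ (ler_wpM2r z0 h)).
  rewrite le_eqVlt; apply/orP; left; apply/eqP.
  field; rewrite ?gt_eqF //; lra.
Qed.

Theorem mainTheorem6 (R : realType) (r : R) (m k n : nat) :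
  1 < r -> (0 < m)%N -> (0 < k)%N ->
  mighty r m -> mighty r k ->
  (nth_prime k ^ 2 < nth_prime m)%N ->
  sigma_neg r (nth_prime k) * u_tail r m < sigma_neg r n <
    sigma_neg r (nth_prime k * nth_prime m) ->
  (nth_prime k %| n)%N.
Proof.
move=> r1 m0 k0 Mm Mk hqP /andP[hlo hhi].
have qp : prime (nth_prime k) := np_prime k k0.
have Pp' : prime (nth_prime m) := np_prime m m0.
move: Mk hqP hlo hhi; rewrite /mighty.
set q := nth_prime k; set P := nth_prime m => Mk hqP hlo hhi.
have q1 := prime_gt1 qp.
case: (posnP n) => [->|n0]; first exact: dvdn0.
apply/negPn/negP => nq.
have sig_pr : forall p, prime p -> sigma_neg r p <= 1 + p%:R `^ (- r).
  move=> p pp; have := @sig_pow R r p 1 pp.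
  by rewrite expn1 !big_ord_recr big_ord0 /= expr0 expr1 add0r.
have sigq : 1 + q%:R `^ (- r) <= sigma_neg r q.
  have := @sig_ge2 R r q 1 q (prime_gt0 qp) _ (dvd1n q) (dvdnn q).
  rewrite (_ : (1%:R : R) = 1) // powR1; apply.
  by rewrite eq_sym neq_ltn q1 orbT.
have sqP : sigma_neg r (q * P) <= (1 + q%:R `^ (- r)) * (1 + P%:R `^ (- r)).
  apply: (le_trans (@sig_mul R r q P _ (prime_gt0 qp) (prime_gt0 Pp'))).
    rewrite prime_coprime // dvdn_prime2 //; apply/negP => /eqP eqP'.
    move: hqP; rewrite -eqP' -mulnn; nia.
  apply: ler_pM; [exact: sig_ge0 | exact: sig_ge0 | exact: sig_pr | exact: sig_pr].
case: (pselect (exists p, [/\ prime p, (p %| n)%N & (p < q)%N])).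
  move=> [p [pp pn pq]].
  have h1 : 1 + p%:R `^ (- r) <= sigma_neg r n.
    have := @sig_ge2 R r n 1 p n0 _ (dvd1n n) pn.
    rewrite (_ : (1%:R : R) = 1) // powR1; apply.
    by rewrite eq_sym neq_ltn prime_gt1 ?orbT.
  have h2 := ineqA r1 pp pq hqP.
  lra.
move=> hno.
have hcond : forall p, prime p -> (p %| n)%N ->
    (nth_prime k < p < nth_prime n)%N.
  move=> p pp pn; apply/andP; split.
    rewrite -/q ltn_neqAle; apply/andP; split.
      by apply/negP => /eqP eq; move: nq; rewrite eq pn.
    by rewrite leqNgt; apply/negP => pq; apply: hno; exists p.
  exact: leq_ltn_trans (dvdn_leq n0 pn) (np_ge n).
have h1 := sig_le_Pp r1 n0 hcond.
have h2 := @Pp_le_u R r r1 k n.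
have h3 : sigma_neg r q <= sigma_neg r q * u_tail r m.
  by apply: ler_peMr; [exact: sig_ge0 | exact: u_ge1].
lra.
Qed.
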